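(* Let $\Gamma$ be a symmetric, folded, idempotent family of Boolean promise relations such that $\operatorname{Maj}_L\notin\operatorname{poly}(\Gamma)$ for some odd positive integer $L$. Then there is a promise relation $(P,Q)$ with $\operatorname{poly}(\Gamma)\subseteq\operatorname{poly}(P,Q)$ of one of the following two forms: either $P=\operatorname{Ham}_k(\{(k+1)/2\})$, $Q=\operatorname{Ham}_k(\{0,1,\dots,k-1\})$ for some odd $k\ge 3$; or $P=\operatorname{Ham}_k(\{1,k\})$, $Q=\operatorname{Ham}_k(\{0,1,\dots,k\}\setminus\{b\})$ for some $k\ge 3$ and $b\in\{2,\dots,k-1\}$.
   Context: Domain $\{0,1\}$. A promise relation is a pair $(P,Q)$ with $P\subseteq Q\subseteq\{0,1\}^k$. $f:\{0,1\}^L\to\{0,1\}$ is a weak polymorphism of $(P,Q)$ if for all $x^{(1)},\dots,x^{(L)}\in P$, $(f(x^{(1)}_1,\dots,x^{(L)}_1),\dots,f(x^{(1)}_k,\dots,x^{(L)}_k))\in Q$; $\operatorname{poly}(\Gamma)$ is the set of functions that are weak polymorphisms of every member of $\Gamma$. $\Gamma$ is symmetric if every relation appearing in it is invariant under coordinate permutations; folded if each $f\in\operatorname{poly}(\Gamma)$ satisfies $f(\bar x)=\neg f(x)$; idempotent if each $f\in\operatorname{poly}(\Gamma)$ satisfies $f(0,\dots,0)=0$, $f(1,\dots,1)=1$. $\operatorname{Ham}_k(S)=\{x\in\{0,1\}^k:|x|\in S\}$ where $|x|$ is the Hamming weight. For odd $L$, $\operatorname{Maj}_L(x)=1$ iff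 $\sum_i x_i>L/2$. *)

(* Defs.v *)
From mathcomp Require Import all_boot all_fingroup.
Set Implicit Arguments. Unset Strict Implicit. Unset Printing Implicit Defensive.

Definition btuple (k : nat) := {ffun 'I_k -> bool}.

(* A promise relation of arity k: a pair (P, Q) of sets of tuples.
   (The requirement P \subset Q is imposed separately where needed.) *)
Definition prel (k : nat) := ({set btuple k} * {set btuple k})%type.

Definition PFam := forall k : nat, prel k -> Prop.

Definition bfun (L : nat) := btuple L -> bool.

Definition hw (k : nat) (x : btuple k) : nat := \sum_(i < k) nat_of_bool (x i).

Definition Ham (k : nat) (S : pred nat) : {set btuple k} := [set x | hw x \in S].

Definition weak_poly (L k : nat) (R : prel k) (f : bfun L) : Prop :=
  forall x : 'I_L -> btuple k,
    (forall j, x j \in R.1) ->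
    [ffun i : 'I_k => f [ffun j : 'I_L => x j i]] \in R.2.

Definition in_poly (G : PFam) (L : nat) (f : bfun L) : Prop :=
  forall k (R : prel k), G k R -> weak_poly R f.

Definition is_promise (k : nat) (R : prel k) : Prop := R.1 \subset R.2.

Definition perm_tuple (k : nat) (s : 'S_k) (x : btuple k) : btuple k :=
  [ffun i => x (s i)].

Definition symmetricF (G : PFam) : Prop :=
  forall k (R : prel k), G k R ->
    forall (s : 'S_k) (x : btuple k),
      (perm_tuple s x \in R.1) = (x \in R.1) /\
      (perm_tuple s x \in R.2) = (x \in R.2).

Definition negt (L : nat) (x : btuple L) : btuple L := [ffun i => ~~ x i].

Definition foldedF (G : PFam) : Prop :=
  forall L (f : bfun L), in_poly G f -> forall x, f (negt x) = ~~ f x.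

Definition idempotentF (G : PFam) : Prop :=
  forall L (f : bfun L), in_poly G f ->
    f [ffun=> false] = false /\ f [ffun=> true] = true.

(* Maj_L(x) = 1 iff sum_i x_i > L/2, i.e. 2 * |x| > L. *)
Definition Maj (L : nat) : bfun L := fun x => L < (hw x).*2.
Arguments Maj L x : clear implicits.

(* Main.v *)
Require Import Defs.
From mathcomp Require Import all_boot all_fingroup.
From mathcomp Require Import zify.
From Stdlib Require Import Classical.

Lemma sum_const_ord (n c : nat) : \sum_(i < n) c = n * c.
Proof. by rewrite big_const_ord iter_addn_0 mulnC. Qed.

Lemma hw_le k (x : btuple k) : hw x <= k.
Proof.
apply: (@leq_trans (\sum_(i < k) 1)); last by rewrite sum_const_ord muln1.
by apply: leq_sum => i _; exact: leq_b1.
Qed.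

Arguments hw_le {k}.

Lemma hw_perm k (s : 'S_k) (x : btuple k) : hw (perm_tuple s x) = hw x.
Proof.
rewrite /hw /perm_tuple [RHS](reindex_inj (@perm_inj _ s)) /=.
by apply: eq_bigr => i _; rewrite ffunE.
Qed.

Lemma hw_lt k (x x' : btuple k) :
  (forall i, x i ==> x' i) -> (exists i, x i != x' i) -> hw x < hw x'.
Proof.
move=> Hle [i0 Hi0]; rewrite /hw (bigD1 i0) //= [X in _ < X](bigD1 i0) //=.
rewrite -addSn; apply: leq_add.
  by move: (Hle i0) Hi0; case: (x i0); case: (x' i0).
by apply: leq_sum => i _; move: (Hle i); case: (x i); case: (x' i).
Qed.

Lemma hw_true k (x : btuple k) i : x i = false -> hw x < k.
Proof.
move=> Hi; rewrite /hw (bigD1 i) //= Hi add0n.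
have Hc : \sum_(j < k | j != i) 1 = k.-1.
  rewrite sum1dep_card.
  have -> : [set x | x != i] = [set~ i] by apply/setP=> y; rewrite !inE.
  by rewrite cardsC1 card_ord.
apply: (@leq_trans (\sum_(j < k | j != i) 1).+1); last first.
  by rewrite Hc; have := ltn_ord i; lia.
by rewrite ltnS; apply: leq_sum => j _; exact: leq_b1.
Qed.

Lemma hw_false k (x : btuple k) i : x i = true -> 0 < hw x.
Proof. by move=> Hi; rewrite /hw (bigD1 i) //= Hi. Qed.

Arguments hw_true {k x i}.
Arguments hw_false {k x i}.

Lemma inv_mem k (A : {set btuple k}) :
  (forall (s : 'S_k) x, (perm_tuple s x \in A) = (x \in A)) ->
  forall x x', hw x = hw x' -> (x \in A) = (x' \in A).
Proof.
move=> HA.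
suff H : forall d (x x' : btuple k), #|[set i | x i != x' i]| <= d ->
    hw x = hw x' -> (x \in A) = (x' \in A).
  by move=> x x'; apply: H (leqnn _).
elim=> [|d IH] x x' Hd Hw.
  have -> : x = x' => //.
  move: Hd; rewrite leqn0 cards_eq0 => /eqP H0.
  apply/ffunP=> i; apply/eqP; apply/negPn/negP => Hi.
  have : i \in [set i | x i != x' i] by rewrite inE.
  by rewrite H0 inE.
case: (boolP [exists i, x i != x' i]) => [Hex | /existsPn Hno]; last first.
  have -> : x = x' => //.
  by apply/ffunP=> i; apply/eqP; move: (Hno i); rewrite negbK.
have Hex' : exists i, x i != x' i by case/existsP: Hex => i Hi; exists i.
case: (pickP (fun i => x i && ~~ x' i)) => [i /andP [xi nx'i] | Hn1]; last first.
  have : hw x < hw x'.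
    apply: hw_lt => // i; move: (Hn1 i) => /=; by case: (x i); case: (x' i).
  by rewrite Hw ltnn.
case: (pickP (fun i => ~~ x i && x' i)) => [j /andP [nxj x'j] | Hn2]; last first.
  have : hw x' < hw x.
    apply: hw_lt => [l|]; first by move: (Hn2 l) => /=; case: (x l); case: (x' l).
    by case: Hex' => l Hl; exists l; rewrite eq_sym.
  by rewrite Hw ltnn.
have nij : i != j by apply/eqP => E; move: xi nxj; rewrite E => ->.
rewrite -(HA (tperm i j) x); apply: IH; last by rewrite hw_perm.
apply: leq_trans (_ : #|[set l | x l != x' l] :\ i| <= d).
  apply: subset_leq_card; apply/subsetP => l; rewrite !inE /perm_tuple ffunE.
  case: (l =P i) => [->|/eqP nli]; first by rewrite tpermL; move: nxj nx'i; case: (x j); case: (x' i).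
  case: (l =P j) => [->|/eqP nlj]; first by rewrite tpermR; move: xi x'j; case: (x i); case: (x' j).
  by rewrite tpermD // eq_sym.
move: Hd; rewrite (cardsD1 i) inE xi.
by case: (x' i) nx'i.
Qed.
Definition E k a m (neg : bool) (z : btuple m) : btuple k :=
  [ffun i : 'I_k => if i < a then true else
     match (insub (i - a) : option 'I_m) with Some o => z o (+) neg | None => false end].
Arguments E k a {m} neg z.

Lemma transfer (G : PFam) k (R0 : prel k) a m neg (P' Q' : {set btuple m}) :
  G k R0 -> foldedF G -> idempotentF G ->
  (forall z, z \in P' -> E k a neg z \in R0.1) ->
  (forall z, E k a neg z \in R0.2 -> z \in Q') ->
  forall L (f : bfun L), in_poly G f -> weak_poly (P', Q') f.
Proof.
move=> HG Hfo Hid HP HQ L f Hf Z HZ /=; apply: HQ.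
have := Hf k R0 HG (fun j => E k a neg (Z j)) (fun j => HP _ (HZ j)).
suff -> : [ffun i => f [ffun j => E k a neg (Z j) i]] =
          E k a neg [ffun o => f [ffun j => Z j o]] by [].
apply/ffunP => i; rewrite [RHS]ffunE [LHS]ffunE.
case: ifP => Hia.
  have -> : [ffun j => E k a neg (Z j) i] = [ffun=> true].
    by apply/ffunP=> j; rewrite !ffunE Hia.
  exact: (Hid _ f Hf).2.
case Hins : (insub (i - a) : option 'I_m) => [o|].
  have -> : [ffun j => E k a neg (Z j) i] = [ffun j => Z j o (+) neg].
    by apply/ffunP=> j; rewrite !ffunE Hia Hins.
  rewrite !ffunE; case: (neg).
    have -> : [ffun j => Z j o (+) true] = negt [ffun j => Z j o].
      by apply/ffunP=> j; rewrite !ffunE addbT.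
    by rewrite Hfo // addbT.
  have -> : [ffun j => Z j o (+) false] = [ffun j => Z j o].
    by apply/ffunP=> j; rewrite !ffunE addbF.
  by rewrite addbF.
have -> : [ffun j => E k a neg (Z j) i] = [ffun=> false].
  by apply/ffunP=> j; rewrite !ffunE Hia Hins.
exact: (Hid _ f Hf).1.
Qed.

Lemma hwE k a m neg (z : btuple m) : a + m <= k ->
  hw (E k a neg z) = a + (if neg then m - hw z else hw z).
Proof.
move=> Hk; rewrite /hw.
pose h n := nat_of_bool
  match (insub n : option 'I_m) with Some o => z o (+) neg | None => false end.
pose g n := nat_of_bool (if n < a then true else
     match (insub (n - a) : option 'I_m) with Some o => z o (+) neg | None => false end).
have -> : \sum_(i < k) nat_of_bool (E k a neg z i) = \sum_(0 <= n < k) g n.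
  by rewrite big_mkord; apply: eq_bigr => i _; rewrite ffunE.
rewrite (@big_cat_nat _ _ _ a 0 k) /=; [|by []|by lia].
rewrite (@big_cat_nat _ _ _ (a + m) a k) /=; [|by rewrite leq_addr|by []].
have -> : \sum_(0 <= n < a) g n = a.
  rewrite (eq_big_nat _ _ (F2 := fun _ => 1)) ?sum_nat_const_nat ?subn0 ?muln1 //.
  by move=> n /andP [_ Hn]; rewrite /g Hn.
have -> : \sum_(a + m <= n < k) g n = 0.
  rewrite (eq_big_nat _ _ (F2 := fun _ => 0)) ?sum_nat_const_nat ?muln0 //.
  move=> n /andP [Hn _]; rewrite /g.
  have -> : (n < a) = false by apply/negbTE; rewrite -leqNgt; lia.
  by rewrite insubN //; rewrite -leqNgt; lia.
have -> : \sum_(a <= n < a + m) g n = \sum_(0 <= n < m) h n.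
  rewrite -{1}(add0n a) big_addn.
  have -> : a + m - a = m by lia.
  apply: eq_big_nat => n _; rewrite /g /h.
  have -> : (n + a < a) = false by apply/negbTE; rewrite -leqNgt; lia.
  by rewrite addnK.
rewrite big_mkord addn0; congr (_ + _).
have -> : \sum_(i < m) h i = \sum_(i < m) nat_of_bool (z i (+) neg).
  by apply: eq_bigr => i _; rewrite /h valK.
clear h g; case: neg.
  have Hs : \sum_(i < m) nat_of_bool (z i (+) true) + \sum_(i < m) nat_of_bool (z i) = m.
    rewrite -big_split /=.
    rewrite (eq_bigr (fun _ => 1)) ?sum_const_ord ?muln1 //.
    by move=> i _; case: (z i).
  move: Hs; set A := \sum_(i < m) nat_of_bool (z i (+) true); set B := \sum_(i < m) nat_of_bool (z i); lia.
by apply: eq_bigr => i _; rewrite addbF.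
Qed.

Lemma form1 (G : PFam) k (R0 : prel k) a c (neg : bool) :
  G k R0 -> foldedF G -> idempotentF G -> 0 < c -> a + c.*2.+1 <= k ->
  (forall z : btuple k, hw z = a + (if neg then c else c.+1) -> z \in R0.1) ->
  (forall z : btuple k, hw z = a + (if neg then 0 else c.*2.+1) -> z \notin R0.2) ->
  exists (k : nat) (R : prel k),
    (forall L (f : bfun L), in_poly G f -> weak_poly R f) /\
    ( (odd k /\ 3 <= k /\
       R = (Ham k (pred1 (k.+1./2)), Ham k (fun w => w \in iota 0 k)))
    \/
      (3 <= k /\ exists b, 2 <= b <= k.-1 /\
       R = (Ham k (fun w => (w == 1) || (w == k)),
            Ham k (fun w => (w \in iota 0 k.+1) && (w != b))))).
Proof.
move=> HG Hfo Hid Hc Hk H1 H2.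
exists (c.*2.+1), (Ham (c.*2.+1) (pred1 ((c.*2.+1).+1./2)),
                   Ham (c.*2.+1) (fun w => w \in iota 0 (c.*2.+1))).
split; last by left; split; [rewrite /= odd_double | split; [lia | by []]].
apply: (@transfer G k R0 a _ neg) => //.
  move=> z; rewrite inE /= => /eqP Hz; apply: H1.
  rewrite hwE // Hz; case: (neg); lia.
move=> z Hz; rewrite inE; change (hw z \in iota 0 c.*2.+1); rewrite mem_iota add0n /=.
apply/negP => Hn.
have Hm : hw z = c.*2.+1 by have := hw_le z; lia.
have Hw : hw (E k a neg z) = a + (if neg then 0 else c.*2.+1).
  by rewrite hwE // Hm; case: (neg); lia.
by move: (H2 _ Hw); rewrite Hz.
Qed.

Lemma form2 (G : PFam) k (R0 : prel k) a m b (neg : bool) :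
  G k R0 -> foldedF G -> idempotentF G -> 3 <= m -> 2 <= b <= m.-1 -> a + m <= k ->
  (forall z : btuple k, hw z = a + (if neg then m - 1 else 1) -> z \in R0.1) ->
  (forall z : btuple k, hw z = a + (if neg then 0 else m) -> z \in R0.1) ->
  (forall z : btuple k, hw z = a + (if neg then m - b else b) -> z \notin R0.2) ->
  exists (k : nat) (R : prel k),
    (forall L (f : bfun L), in_poly G f -> weak_poly R f) /\
    ( (odd k /\ 3 <= k /\
       R = (Ham k (pred1 (k.+1./2)), Ham k (fun w => w \in iota 0 k)))
    \/
      (3 <= k /\ exists b, 2 <= b <= k.-1 /\
       R = (Ham k (fun w => (w == 1) || (w == k)),
            Ham k (fun w => (w \in iota 0 k.+1) && (w != b))))).
Proof.
move=> HG Hfo Hid Hm Hb Hk H1 H2 H3.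
exists m, (Ham m (fun w => (w == 1) || (w == m)),
           Ham m (fun w => (w \in iota 0 m.+1) && (w != b))).
split; last by right; split => //; exists b; split.
apply: (@transfer G k R0 a _ neg) => //.
  move=> z; rewrite inE /= => /orP [/eqP Hz|/eqP Hz].
    by apply: H1; rewrite hwE // Hz.
  by apply: H2; rewrite hwE // Hz; case: (neg); lia.
move=> z Hz; rewrite inE; change ((hw z \in iota 0 m.+1) && (hw z != b)); rewrite mem_iota add0n ltnS hw_le /=.
apply/eqP => Hzb.
have Hw : hw (E k a neg z) = a + (if neg then m - b else b) by rewrite hwE // Hzb.
by move: (H3 _ Hw); rewrite Hz.
Qed.

Lemma sum_mulc n (F : 'I_n -> nat) c : \sum_(i < n) (F i * c) = (\sum_(i < n) F i) * c.
Proof. by rewrite big_distrl. Qed.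

Theorem lemma4p6 (G : PFam) :
  (forall k (R : prel k), G k R -> is_promise R) ->
  symmetricF G -> foldedF G -> idempotentF G ->
  (exists L, odd L /\ 0 < L /\ ~ in_poly G (Maj L)) ->
  exists (k : nat) (R : prel k),
    (forall L (f : bfun L), in_poly G f -> weak_poly R f) /\
    ( (odd k /\ 3 <= k /\
       R = (Ham k (pred1 (k.+1./2)), Ham k (fun w => w \in iota 0 k)))
    \/
      (3 <= k /\ exists b, 2 <= b <= k.-1 /\
       R = (Ham k (fun w => (w == 1) || (w == k)),
            Ham k (fun w => (w \in iota 0 k.+1) && (w != b))))).
Proof.
move=> HP Hsym Hfo Hid [L [oddL [L0 HnM]]].
have [k [R0 [HG [x [Hx Hy]]]]] : exists k (R0 : prel k), G k R0 /\
    exists x : 'I_L -> btuple k, (forall j, x j \in R0.1) /\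
      [ffun i : 'I_k => Maj L [ffun j => x j i]] \notin R0.2.
  apply: NNPP => Hne; apply: HnM => k R0 HG x Hx.
  apply/negPn/negP => Hy; apply: Hne; exists k, R0; split => //; exists x; by split.
set y := [ffun i : 'I_k => Maj L [ffun j => x j i]] in Hy.
pose w := hw y.
pose s j := hw (x j).
have inv1 : forall z z' : btuple k, hw z = hw z' -> (z \in R0.1) = (z' \in R0.1).
  by apply: inv_mem => s' z; exact: (Hsym k R0 HG s' z).1.
have inv2 : forall z z' : btuple k, hw z = hw z' -> (z \in R0.2) = (z' \in R0.2).
  by apply: inv_mem => s' z; exact: (Hsym k R0 HG s' z).2.
have memP : forall (z : btuple k) j, hw z = s j -> z \in R0.1.
  by move=> z j Hz; rewrite (inv1 _ (x j)).
have memQ : forall z : btuple k, hw z = w -> z \notin R0.2.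
  by move=> z Hz; rewrite (inv2 _ y).
have Hsw : forall j, s j != w.
  move=> j; apply/eqP => Hj; move: (memQ (x j) Hj).
  by rewrite (subsetP (HP k R0 HG) _ (Hx j)).
have Hsk : forall j, s j <= k := fun j => hw_le (x j).
have Hwk : w <= k := hw_le y.
pose r i := hw [ffun j : 'I_L => x j i].
have Hsum : \sum_(j < L) s j = \sum_(i < k) r i.
  rewrite /s /r /hw exchange_big /=; apply: eq_bigr => i _.
  by apply: eq_bigr => j _; rewrite ffunE.
have Hwsum : w = \sum_(i < k) nat_of_bool (y i) by [].
have Hyi : forall i, y i = (L < (r i).*2) by move=> i; rewrite /y ffunE.
have HrL : forall i, r i <= L := fun i => hw_le _.
case: (pickP (fun j => s j < w)) => [j1 Hj1 | Hno1];
  case: (pickP (fun j => w < s j)) => [j2 Hj2 | Hno2] /=.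
-
  have F2 : forall s1 s2 j1 j2, s j1 = s1 -> s j2 = s2 -> s1 < w < s2 ->
      (0 < s1) || (s2 < k) ->
      exists (k : nat) (R : prel k),
    (forall L (f : bfun L), in_poly G f -> weak_poly R f) /\
    ( (odd k /\ 3 <= k /\
       R = (Ham k (pred1 (k.+1./2)), Ham k (fun w => w \in iota 0 k)))
    \/
      (3 <= k /\ exists b, 2 <= b <= k.-1 /\
       R = (Ham k (fun w => (w == 1) || (w == k)),
            Ham k (fun w => (w \in iota 0 k.+1) && (w != b))))).
    move=> s1 s2 i1 i2 Hs1 Hs2 /andP [h1 h2] /orP [Hp|Hp].
      apply: (@form2 G k R0 s1.-1 (s2 - s1).+1 (w - s1).+1 false) => //;
        try (move: (Hsk i2); lia);
        move=> z /= Hz; [apply: (memP z i1) | apply: (memP z i2) | apply: memQ]; lia.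
    apply: (@form2 G k R0 s1 (s2 - s1).+1 (s2 - w).+1 true) => //;
      try lia;
      move=> z /= Hz; [apply: (memP z i2) | apply: (memP z i1) | apply: memQ]; lia.
  case: (pickP (fun j => 0 < s j < k)) => [j /andP [Hj0 Hjk] | Hnone].
    case: (ltngtP (s j) w) => Hjw.
    + by apply: (F2 (s j) (s j2) j j2) => //; [rewrite Hjw | rewrite Hj0].
    + by apply: (F2 (s j1) (s j) j1 j) => //; [rewrite Hj1 | rewrite Hjk orbT].
    + by move: (Hsw j); rewrite Hjw eqxx.
  exfalso.
  have Hk0 : 0 < k by move: (Hsk j2); lia.
  have Hcol : forall j i, x j i = (s j == k).
    move=> j i; move: (Hnone j) (Hsk j) => /= Hn Hs.
    case Hxi: (x j i).
      have H : 0 < s j := hw_false Hxi.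
      by symmetry; apply/eqP; lia.
    have H : s j < k := hw_true Hxi.
    by symmetry; apply/eqP; lia.
  have Hrow : forall i, [ffun j => x j i] = [ffun j => s j == k].
    by move=> i; apply/ffunP=> j; rewrite !ffunE Hcol.
  have Hw : w = k * Maj L [ffun j => s j == k].
    rewrite Hwsum -sum_const_ord; apply: eq_bigr => i _.
    by rewrite /y ffunE Hrow.
  move: Hw (Hsk j2) Hj1 Hj2; case: (Maj L _) => /= Hw h1 h2 h3; lia.
-
  have Hlt : forall j, s j < w.
    by move=> j; move: (Hno2 j) (Hsw j) => /= h1 h2; lia.
  have [j Hj] : exists j, w < (s j).*2.
    case: (pickP (fun j => w < (s j).*2)) => [j Hj|Hn]; first by exists j.
    exfalso.
    have A : \sum_(j < L) (s j * 2) <= \sum_(j < L) w.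
      by apply: leq_sum => j _; move: (Hn j) => /= h; lia.
    have B : \sum_(i < k) (nat_of_bool (y i) * L.+1) <= \sum_(i < k) (r i * 2).
      by apply: leq_sum => i _; rewrite Hyi; case: (ltnP L (r i).*2) => h /=; lia.
    move: A B; rewrite !sum_mulc sum_const_ord -Hwsum Hsum.
    move: (Hlt j1); nia.
  apply: (@form1 G k R0 ((s j).*2 - w).-1 (w - s j) false) => //;
    try (move: (Hlt j); lia).
  + move=> z /= Hz; apply: (memP z j); move: (Hlt j); lia.
  + move=> z /= Hz; apply: memQ; move: (Hlt j); lia.
-
  have Hgt : forall j, w < s j.
    by move=> j; move: (Hno1 j) (Hsw j) => /= h1 h2; lia.
  have [j Hj] : exists j, (s j).*2 < k + w.
    case: (pickP (fun j => (s j).*2 < k + w)) => [j Hj|Hn]; first by exists j.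
    exfalso.
    have A : \sum_(j < L) (k + w) <= \sum_(j < L) (s j * 2).
      by apply: leq_sum => j _; move: (Hn j) => /= h; lia.
    have B : \sum_(i < k) (r i * 2 + 1) <= \sum_(i < k) (L + nat_of_bool (y i) * L.+1).
      apply: leq_sum => i _; rewrite Hyi; case: (ltnP L (r i).*2) => h /=.
        by move: (HrL i); lia.
      have : (r i).*2 != L by apply/eqP => e; move: oddL; rewrite -e odd_double.
      lia.
    move: A B; rewrite !big_split /= !sum_mulc !sum_const_ord -Hwsum Hsum.
    move: (Hgt j2) (Hsk j2); nia.
  apply: (@form1 G k R0 w (s j - w) true) => //;
    try (move: (Hgt j); lia).
  + move=> z /= Hz; apply: (memP z j); move: (Hgt j); lia.
  + move=> z /= Hz; apply: memQ; lia.
- exfalso; move: (Hno1 (Ordinal L0)) (Hno2 (Ordinal L0)) (Hsw (Ordinal L0)) => /= h1 h2 h3.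
  lia.
Qed.
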